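(* Let $d\ge 2$, $n\ge 1$ and $0\le k<n$ be integers, and let $\mathbb{Z}_d$ be the ring of integers modulo $d$. Let $\Lambda=\begin{pmatrix}0&I_n\\-I_n&0\end{pmatrix}$ and $\mathrm{Sp}(2n,\mathbb{Z}_d)=\{M\in M_{2n}(\mathbb{Z}_d): M^T\Lambda M=\Lambda\}$. Let $T(n,k,d)$ be the set of all $M\in \mathrm{Sp}(2n,\mathbb{Z}_d)$ which, in block form with respect to the partition of rows and columns into consecutive blocks of sizes $(n-k,\,k,\,n-k,\,k)$, have the form $$M=\begin{pmatrix}(A^T)^{-1}&0&0&0\\ M_{21}&M_{22}&0&M_{24}\\ M_{31}&M_{32}&A&M_{34}\\ M_{41}&M_{42}&0&M_{44}\end{pmatrix}$$ for some invertible $A\in \mathrm{GL}(n-k,\mathbb{Z}_d)$ and arbitrary blocks $M_{ij}$ of the appropriate sizes (when $k=0$ this reads $M=\begin{pmatrix}(A^T)^{-1}&0\\ M_{31}&A\end{pmatrix}$). Then $T(n,k,d)$ is a subgroup of $\mathrm{Sp}(2n,\mathbb{Z}_d)$.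
   Context: All matrix arithmetic is over the ring $\mathbb{Z}_d$ (which need not be a field). $I_m$ denotes the $m\times m$ identity matrix and $\mathrm{GL}(m,\mathbb{Z}_d)$ the group of invertible $m\times m$ matrices over $\mathbb{Z}_d$. *)

(* Defs.v *)
From HB Require Import structures.
From mathcomp Require Import all_boot all_order all_algebra all_fingroup.
Unset Printing Implicit Defensive.
Import GRing.Theory.
Local Open Scope ring_scope.

Definition Lambda (d n : nat) : 'M['Z_d]_(n + n) :=
  block_mx 0 1%:M (- 1%:M) 0.

Definition Sp (d n : nat) (M : 'M['Z_d]_(n + n)) : Prop :=
  M^T *m Lambda d n *m M = Lambda d n.

(* T(n,k,d): symplectic M with block form, for blocks of sizes
   (n-k, k, n-k, k) (row/column indices [0,n-k), [n-k,n), [n,2n-k), [2n-k,2n)):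
     [ (A^T)^-1  0    0   0   ]
     [  *        *    0   *   ]
     [  *        *    A   *   ]
     [  *        *    0   *   ]
   with A invertible (n-k)x(n-k). *)
Definition Tset (n k d : nat) (M : 'M['Z_d]_(n + n)) : Prop :=
  Sp d n M /\
  exists A : 'M['Z_d]_(n - k), A \in unitmx /\
    (forall (i j : 'I_(n + n)) (a b : 'I_(n - k)),
        val i = val a -> val j = val b -> M i j = invmx A^T a b) /\
    (forall (i j : 'I_(n + n)) (a b : 'I_(n - k)),
        val i = (n + val a)%N -> val j = (n + val b)%N -> M i j = A a b) /\
    (forall i j : 'I_(n + n), (val i < n - k)%N -> (n - k <= val j)%N -> M i j = 0) /\
    (forall i j : 'I_(n + n), (n <= val j < n + n - k)%N ->
        ~~ (n <= val i < n + n - k)%N -> M i j = 0).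

(* Main.v *)
Require Import Defs.
From HB Require Import structures.
From mathcomp Require Import all_boot all_order all_algebra all_fingroup.
From mathcomp Require Import zify.
Local Open Scope ring_scope.
Import GRing.Theory.

Section Aux.
Variable R : comUnitRingType.

Lemma invmx_left m (A B : 'M[R]_m) : B *m A = 1%:M -> A \in unitmx -> invmx A = B.
Proof. by move=> BA uA; rewrite -[invmx A]mul1mx -BA mulmxK. Qed.

Lemma invmxM' m (X Y : 'M[R]_m) : X \in unitmx -> Y \in unitmx ->
  invmx (X *m Y) = invmx Y *m invmx X.
Proof.
move=> uX uY; apply: invmx_left; last by rewrite unitmx_mul uX uY.
by rewrite mulmxA -(mulmxA (invmx Y)) mulVmx // mulmx1 mulVmx.
Qed.

Lemma sum_inj m p (g : 'I_p -> 'I_m) (f : 'I_m -> R) : injective g ->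
  (forall l, (forall c, g c != l) -> f l = 0) -> \sum_l f l = \sum_c f (g c).
Proof.
move=> ginj H; rewrite (bigID (mem (g @: setT))) /= [X in _ + X]big1 ?addr0.
  rewrite big_imset /=; last by move=> x y _ _; apply: ginj.
  by apply: eq_bigl => c; rewrite in_setT.
move=> l Hl; apply: H => c; apply: contraNneq Hl => <-.
by apply: imset_f; rewrite in_setT.
Qed.
End Aux.

Lemma LL d n : Lambda d n *m Lambda d n = - 1%:M.
Proof.
rewrite /Lambda mulmx_block !mul0mx !mulmx0 !mul1mx !mulmx1 ?mulNmx ?mul0mx.
idtac.
rewrite ?addr0 ?add0r ?oppr0 (scalar_mx_block n n) opp_block_mx ?oppr0.
by [].
Qed.

Definition Yof {d n} (M : 'M['Z_d]_(n + n)) := - (Lambda d n *m M^T *m Lambda d n).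

Lemma YM d n (M : 'M['Z_d]_(n + n)) : Sp d n M -> Yof M *m M = 1%:M.
Proof.
move=> H; rewrite /Yof mulNmx.
have -> : Lambda d n *m M^T *m Lambda d n *m M = Lambda d n *m (M^T *m Lambda d n *m M)
  by rewrite !mulmxA.
by rewrite H LL opprK.
Qed.

Lemma Yblock d n (M : 'M['Z_d]_(n + n)) : Yof M =
  block_mx (drsubmx M)^T (-(ursubmx M)^T) (-(dlsubmx M)^T) (ulsubmx M)^T.
Proof.
rewrite /Yof -{1}[M]submxK tr_block_mx /Lambda !mulmx_block.
rewrite ?mul0mx ?mulmx0 ?mul1mx ?mulmx1 ?mulNmx ?mulmxN ?mul0mx ?mul1mx.
rewrite ?addr0 ?add0r ?oppr0 opp_block_mx ?opprK.
by rewrite !mulmx1.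
Qed.

Definition sig {n} (i : 'I_(n + n)) : 'I_(n + n) :=
  match split i with inl a => rshift n a | inr b => lshift n b end.

Lemma val_sig n (i : 'I_(n + n)) : val (sig i) = if (i < n)%N then (i + n)%N else (i - n)%N.
Proof.
rewrite /sig; case: splitP => a /= ->; have := ltn_ord a; lia.
Qed.

Lemma sig_l n (a : 'I_n) : sig (lshift n a) = rshift n a.
Proof. apply/val_inj; rewrite val_sig /= ltn_ord; lia. Qed.
Lemma sig_r n (a : 'I_n) : sig (rshift n a) = lshift n a.
Proof. apply/val_inj; rewrite val_sig /=; case: ifP => /= h; lia. Qed.

Lemma Yentry d n (M : 'M['Z_d]_(n + n)) i j :
  Yof M i j = (if (i < n)%N == (j < n)%N then 1 else -1) * M (sig j) (sig i).
Proof.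
rewrite Yblock.
have rn : forall m : nat, (n + m < n)%N = false by move=> m; lia.
case: (splitP i) => a ha; case: (splitP j) => b hb;
  [have ei : i = lshift n a by apply/val_inj; rewrite /= ha | have ei : i = lshift n a by apply/val_inj; rewrite /= ha
  | have ei : i = rshift n a by apply/val_inj; rewrite /= ha | have ei : i = rshift n a by apply/val_inj; rewrite /= ha];
  [have ej : j = lshift n b by apply/val_inj; rewrite /= hb | have ej : j = rshift n b by apply/val_inj; rewrite /= hb
  | have ej : j = lshift n b by apply/val_inj; rewrite /= hb | have ej : j = rshift n b by apply/val_inj; rewrite /= hb];
  rewrite ei ej ?block_mxEul ?block_mxEur ?block_mxEdl ?block_mxEdr ?sig_l ?sig_r !mxE /=;
  rewrite ?ltn_ord ?rn /= ?mul1r ?mulN1r //.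
Qed.

Lemma lek n k : (n - k <= n + n)%N. Proof. lia. Qed.
Definition g1 n k (c : 'I_(n - k)) : 'I_(n + n) := widen_ord (lek n k) c.
Lemma g3P n k (c : 'I_(n - k)) : (n + c < n + n)%N.
Proof. have := ltn_ord c; lia. Qed.
Definition g3 n k (c : 'I_(n - k)) : 'I_(n + n) := Ordinal (@g3P n k c).

Lemma g1_inj n k : injective (g1 n k).
Proof. by move=> x y /(congr1 val) /= e; apply/val_inj. Qed.
Lemma g3_inj n k : injective (g3 n k).
Proof. by move=> x y /(congr1 val) /= /addnI e; apply/val_inj. Qed.

Lemma T_one d n k : Tset n k d (1%:M : 'M['Z_d]_(n + n)).
Proof.
split; first by rewrite /Sp trmx1 mul1mx mulmx1.
exists 1%:M; split; first exact: unitmx1.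
split; first by move=> i j a b hi hj; rewrite trmx1 invmx1 !mxE -val_eqE hi hj val_eqE.
split; first by move=> i j a b hi hj; rewrite !mxE -val_eqE hi hj eqn_add2l val_eqE.
split.
  move=> i j hi hj; rewrite !mxE; case: eqP => [e|//]; subst; exfalso; lia.
move=> i j hj hi; rewrite !mxE; case: eqP => [e|//]; subst; exfalso.
by move: hi; rewrite hj.
Qed.

Lemma T_mul d n k (M N : 'M['Z_d]_(n + n)) : Tset n k d M -> Tset n k d N -> Tset n k d (M *m N).
Proof.
move=> [SM [A [uA [H11M [H33M [Hz1M Hz3M]]]]]] [SN [B [uB [H11N [H33N [Hz1N Hz3N]]]]]].
split.
  rewrite /Sp trmx_mul.
  have -> : N^T *m M^T *m Lambda d n *m (M *m N) = N^T *m (M^T *m Lambda d n *m M) *m N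
    by rewrite !mulmxA.
  by rewrite SM SN.
exists (A *m B); split; first by rewrite unitmx_mul uA uB.
split.
  move=> i j a b hi hj; rewrite mxE (@sum_inj _ _ _ (g1 n k)); last first.
  - move=> l hl; have h1 : (i < n - k)%N by rewrite hi ltn_ord.
    have h2 : (n - k <= l)%N.
      rewrite leqNgt; apply/negP => lt; have := hl (Ordinal lt).
      by rewrite (_ : g1 _ _ _ = l) ?eqxx //; apply/val_inj.
    by rewrite Hz1M ?mul0r.
  - exact: g1_inj.
  rewrite trmx_mul invmxM' ?unitmx_tr // mxE; apply: eq_bigr => c _.
  by rewrite (H11M i (g1 n k c) a c) // (H11N (g1 n k c) j c b).
split.
  move=> i j a b hi hj; rewrite mxE (@sum_inj _ _ _ (g3 n k)); last first.
  - move=> l hl; have h1 : (n <= j < n + n - k)%N by rewrite hj /=; have := ltn_ord b; lia.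
    rewrite Hz3N ?mulr0 //.
    apply/negP => /andP [l1 l2]; have lt : (l - n < n - k)%N by move: l1 l2 => /= l1 l2; lia.
    have := hl (Ordinal lt).
    by rewrite (_ : g3 _ _ _ = l) ?eqxx //; apply/val_inj => /=; move: l1 => /= l1; lia.
  - exact: g3_inj.
  rewrite mxE; apply: eq_bigr => c _.
  by rewrite (H33M i (g3 n k c) a c) // (H33N (g3 n k c) j c b).
split.
  move=> i j hi hj; rewrite mxE big1 // => l _.
  case: (ltnP l (n - k)) => hl; first by rewrite Hz1N ?mulr0.
  by rewrite Hz1M ?mul0r.
move=> i j hj hi; rewrite mxE big1 // => l _.
case: (boolP (n <= l < n + n - k)%N) => hl; first by rewrite Hz3M ?mul0r.
by rewrite Hz3N ?mulr0.
Qed.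

Lemma T_inv d n k (M : 'M['Z_d]_(n + n)) : Tset n k d M -> Tset n k d (invmx M).
Proof.
move=> [SM [A [uA [H11M [H33M [Hz1M Hz3M]]]]]].
have uM : M \in unitmx by case: (mulmx1_unit (@YM d n M SM)).
have eY : invmx M = Yof M := @invmx_left _ _ _ _ (@YM d n M SM) uM.
split.
  rewrite /Sp -{1}SM.
  have -> : (invmx M)^T *m (M^T *m Lambda d n *m M) *m invmx M =
    (M *m invmx M)^T *m Lambda d n *m (M *m invmx M) by rewrite trmx_mul !mulmxA.
  by rewrite mulmxV // trmx1 mul1mx mulmx1.
exists (invmx A); split; first by rewrite unitmx_inv.
split.
  move=> i j a b /= hi hj; have := ltn_ord a; have := ltn_ord b => lb la.
  rewrite eY Yentry (H33M (sig j) (sig i) b a); last 2 first.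
  - by rewrite val_sig /=; have := ltn_ord i; have := ltn_ord j; case: ifP => ?; lia.
  - by rewrite val_sig /=; have := ltn_ord i; have := ltn_ord j; case: ifP => ?; lia.
  rewrite trmx_inv invmxK mxE.
  have -> : (i < n)%N by lia.
  have -> : (j < n)%N by lia.
  by rewrite mul1r.
split.
  move=> i j a b /= hi hj; have := ltn_ord a; have := ltn_ord b => lb la.
  rewrite eY Yentry (H11M (sig j) (sig i) b a); last 2 first.
  - by rewrite val_sig /=; have := ltn_ord i; have := ltn_ord j; case: ifP => ?; lia.
  - by rewrite val_sig /=; have := ltn_ord i; have := ltn_ord j; case: ifP => ?; lia.
  rewrite -trmx_inv mxE.
  have -> : (i < n)%N = false by lia.
  have -> : (j < n)%N = false by lia.
  by rewrite mul1r.
split.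
  move=> i j /= hi hj; rewrite eY Yentry Hz3M ?mulr0 //.
    by rewrite val_sig /=; have := ltn_ord i; have := ltn_ord j; case: ifP => ?; lia.
  by rewrite !val_sig /=; have := ltn_ord i; have := ltn_ord j; case: ifP => ?; lia.
move=> i j /= hj hi; rewrite eY Yentry Hz1M ?mulr0 //.
  by rewrite val_sig /=; have := ltn_ord i; have := ltn_ord j; case: ifP => ?; lia.
by move: hi; rewrite !val_sig /=; have := ltn_ord i; have := ltn_ord j; case: ifP => ?; lia.
Qed.

Theorem theorem1 (d n k : nat) (hd : (2 <= d)%N) (hn : (1 <= n)%N) (hk : (k < n)%N) :
  [/\ (forall M : 'M['Z_d]_(n + n), Tset n k d M -> Sp d n M),
      Tset n k d (1%:M : 'M['Z_d]_(n + n)),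
      (forall M N : 'M['Z_d]_(n + n), Tset n k d M -> Tset n k d N -> Tset n k d (M *m N))
    & (forall M : 'M['Z_d]_(n + n), Tset n k d M -> Tset n k d (invmx M))].
Proof.
split; first by move=> M [].
- exact: T_one.
- exact: T_mul.
- exact: T_inv.
Qed.
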